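(* Fix $\vartheta>0$ and let $D_n^{(\vartheta)}$ be the depth of the $n$-th inserted node in a Hoppe tree with parameter $\vartheta$. Then for all $n\geq 2$ $$D_n^{(\vartheta)}\stackrel{d}{=} 1 + \sum_{i=1}^{n-2} B_{i},$$ where $B_1,\ldots,B_{n-2}$ are independent random variables with $\mathbb{P}(B_i=1)=1-\mathbb{P}(B_i=0)= \frac{1}{\vartheta+i}$ for $i=1,\ldots,n-2$.
   Context: Hoppe tree with parameter $\vartheta>0$: the tree is grown by successive insertion of nodes, labelled $1,2,3,\ldots$ in order of insertion. Initially there is only the root (node $1$). In each step a parent node is chosen among the existing nodes, independently of the past, with probability proportional to its weight, where the root has weight $\vartheta$ and every other node has weight $1$; a new node is attached as a child of the chosen node. The Hoppe tree with $n$ nodes is the tree after $n-1$ insertions. The depth of a node is its distance (number of edges) to the root. *)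

(* Defs.v *)
From HB Require Import structures.
From mathcomp Require Import all_boot all_order all_algebra.
From mathcomp Require Import reals.
Set Implicit Arguments. Unset Strict Implicit. Unset Printing Implicit Defensive.
Import Order.TTheory GRing.Theory Num.Theory.
Local Open Scope ring_scope.

(* Hoppe tree with n nodes, encoded by its parent function.
   Nodes are 0-indexed: index k : 'I_n stands for the node labelled k+1
   (the root, label 1, is index 0).  A parent function f : {ffun 'I_n -> 'I_n}
   sends every non-root node k to its parent f k; the root is sent to itself. *)

(* Probability that, when inserting node index k (k >= 1), its parent is j:
   existing nodes are indices 0..k-1, total weight theta + (k-1). *)
Definition hoppe_weight (R : realType) (theta : R) (n : nat) (k j : 'I_n) : R :=
  if val k == 0%N then (if val j == 0%N then 1 else 0)
  else if (val j < val k)%N then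
         (if val j == 0%N then theta else 1) / (theta + (val k).-1%:R)
       else 0.

Definition hoppe_prob (R : realType) (theta : R) (n : nat)
    (f : {ffun 'I_n -> 'I_n}) : R :=
  \prod_(k : 'I_n) hoppe_weight theta k (f k).

Definition par_nat (n : nat) (f : {ffun 'I_n -> 'I_n}) (i : nat) : nat :=
  if (insub i : option 'I_n) is Some o then val (f o) else 0%N.

Fixpoint depth_fuel (par : nat -> nat) (fuel i : nat) : nat :=
  match fuel with
  | 0 => 0
  | m.+1 => if i == 0%N then 0 else (depth_fuel par m (par i)).+1
  end.

(* Depth of node index i in the tree f (fuel n suffices since parents
   have strictly smaller indices). *)
Definition depth (n : nat) (f : {ffun 'I_n -> 'I_n}) (i : nat) : nat :=
  depth_fuel (par_nat f) n i.

(* P(D_n = d): law of the depth of the n-th inserted node (index n-1)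
   in the Hoppe tree with n nodes. *)
Definition hoppe_depth_law (R : realType) (theta : R) (n d : nat) : R :=
  \sum_(f : {ffun 'I_n -> 'I_n})
     (if depth f n.-1 == d then hoppe_prob theta f else 0).

(* P(1 + B_1 + ... + B_{n-2} = d) for independent Bernoulli B_i with
   P(B_i = 1) = 1/(theta+i); b i (i : 'I_(n-2), 0-based) is the value of B_{i+1}. *)
Definition bernoulli_prob (R : realType) (theta : R) (m : nat)
    (b : {ffun 'I_m -> bool}) : R :=
  \prod_(i : 'I_m)
     (if b i then 1 / (theta + (val i).+1%:R) else 1 - 1 / (theta + (val i).+1%:R)).

Definition bernoulli_sum_law (R : realType) (theta : R) (n d : nat) : R :=
  \sum_(b : {ffun 'I_(n - 2) -> bool})
     (if (1 + \sum_(i < n - 2) (b i : nat))%N == d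
      then bernoulli_prob theta b else 0).

(* Main.v *)
Require Import Defs.
From HB Require Import structures.
From mathcomp Require Import all_boot all_order all_algebra.
From mathcomp Require Import reals.
Set Implicit Arguments. Unset Strict Implicit. Unset Printing Implicit Defensive.
Import Order.TTheory GRing.Theory Num.Theory.
Local Open Scope ring_scope.

Local Notation FF n := {ffun 'I_n -> 'I_n}.

Definition pcoef (R : realType) (theta : R) (i : nat) : R := 1 / (theta + i.+1%:R).
Definition Qp (R : realType) (theta : R) (m : nat) : {poly R} :=
  \prod_(i < m) ((1 - pcoef theta i)%:P + (pcoef theta i)%:P * 'X).

Lemma bern_Q (R : realType) (theta : R) (m k : nat) :
  (Qp theta m)`_k = \sum_(b : {ffun 'I_m -> bool} | (\sum_(i<m) (b i : nat) == k)%N)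
      bernoulli_prob theta b.
Proof.
have -> : Qp theta m = \prod_(i < m) \sum_(x : bool)
   (if x then (pcoef theta i)%:P * 'X else (1 - pcoef theta i)%:P).
  apply: eq_bigr => i _; rewrite (bigD1 true) //= (big_pred1 false); [by rewrite addrC| by case].
rewrite bigA_distr_bigA.
have -> : \sum_(f : {ffun 'I_m -> bool}) \prod_(i < m)
    (if f i then (pcoef theta i)%:P * 'X else (1 - pcoef theta i)%:P)
  = \sum_(f : {ffun 'I_m -> bool}) bernoulli_prob theta f *: 'X^(\sum_(i < m) (f i : nat)).
  apply: eq_bigr => f _.
  rewrite -prodrXr -mul_polyC rmorph_prod -big_split /=.
  apply: eq_bigr => i _; case: (f i) => /=; rewrite /pcoef ?expr1 ?expr0 ?mulr1 //.
by rewrite coef_sumMXn.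
Qed.

Lemma bern_law (R : realType) (theta : R) (n d : nat) :
  bernoulli_sum_law theta n d = if d is d'.+1 then (Qp theta (n - 2))`_d' else 0.
Proof.
rewrite /bernoulli_sum_law.
case: d => [|d].
  by rewrite big1 // => b _; rewrite add1n.
by rewrite bern_Q [RHS]big_mkcond /=; apply: eq_bigr => b _; rewrite add1n eqSS.
Qed.

Lemma depth_fuel_ext (par par' : nat -> nat) :
  (forall k, par k = par' k) -> forall fuel i, depth_fuel par fuel i = depth_fuel par' fuel i.
Proof. by move=> e; elim=> [|m IH] i //=; rewrite e IH. Qed.

Lemma depth_fuel_loc (par par' : nat -> nat) :
  (forall k, (0 < k)%N -> (par k < k)%N) -> forall fuel j,
  (forall k, (0 < k <= j)%N -> par k = par' k) ->
  depth_fuel par fuel j = depth_fuel par' fuel j.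
Proof.
move=> dec; elim=> [|m IH] j e //=.
case: eqP => // /eqP jn0.
have jp : (0 < j)%N by rewrite lt0n.
rewrite -e ?jp ?leqnn // IH // => k /andP [k0 kj]; apply: e.
by rewrite k0 /= (leq_trans kj) // ltnW // dec.
Qed.

Lemma depth_fuel_fuel (par : nat -> nat) :
  (forall k, (0 < k)%N -> (par k < k)%N) -> forall fuel fuel' j,
  (j < fuel)%N -> (j < fuel')%N ->
  depth_fuel par fuel j = depth_fuel par fuel' j.
Proof.
move=> dec; elim=> [|m IH] [|m'] j //= h1 h2.
case: eqP => // /eqP jn0.
have jp : (0 < j)%N by rewrite lt0n.
by rewrite (IH m') // (leq_trans (dec _ jp)).
Qed.

Definition spar (n : nat) (f : {ffun 'I_n -> 'I_n}) (k : nat) : nat :=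
  if (par_nat f k < k)%N then par_nat f k else 0%N.

Definition dep' (n : nat) (f : {ffun 'I_n -> 'I_n}) (i : nat) : nat :=
  depth_fuel (spar f) n i.

Lemma spar_lt n (f : {ffun 'I_n -> 'I_n}) k : (0 < k)%N -> (spar f k < k)%N.
Proof. by rewrite /spar; case: ifP. Qed.

Lemma dep'_0 n (f : {ffun 'I_n -> 'I_n}) : dep' f 0 = 0%N.
Proof. by rewrite /dep'; case: n f. Qed.

Lemma dep'_S n (f : {ffun 'I_n -> 'I_n}) i : (0 < i < n)%N ->
  dep' f i = (dep' f (spar f i)).+1.
Proof.
case/andP=> i0 iN; rewrite /dep'.
case: n f iN => [|n] f iN //.
transitivity (depth_fuel (spar f) n (spar f i)).+1.
  by rewrite /= (negbTE (lt0n_neq0 i0)).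
congr _.+1; apply: depth_fuel_fuel; first exact: spar_lt.
  by rewrite (leq_trans (spar_lt f i0)).
by rewrite (leq_trans (spar_lt f i0)) // ltnW.
Qed.

Lemma dep'_loc n (f g : {ffun 'I_n -> 'I_n}) (i : 'I_n) j :
  (forall k, k != i -> f k = g k) -> (j < i)%N -> dep' f j = dep' g j.
Proof.
move=> e ji; rewrite /dep'; apply: depth_fuel_loc; first exact: spar_lt.
move=> k /andP [k0 kj]; rewrite /spar /par_nat.
case: insubP => [o _ ok|] //.
rewrite e // ; apply/negP => /eqP oi.
by move: ji; rewrite -oi ok ltnNge kj.
Qed.

Lemma W_nz (R : realType) (theta : R) n (k j : 'I_n) : hoppe_weight theta k j != 0 ->
  (val k == 0%N -> val j == 0%N) /\ ((0 < k)%N -> (j < k)%N).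
Proof.
move=> h; split=> [/eqP k0 | kp].
  by move: h; rewrite /hoppe_weight k0 eqxx; case: (val j == 0%N) => //; rewrite eqxx.
by move: h; rewrite /hoppe_weight (negbTE (lt0n_neq0 kp)); case: ifP => //; rewrite eqxx.
Qed.

Lemma depth_dep' (R : realType) (theta : R) n (f : {ffun 'I_n -> 'I_n}) i :
  hoppe_prob theta f != 0 -> depth f i = dep' f i.
Proof.
move=> /prodf_neq0 h; rewrite /depth /dep'; apply: depth_fuel_ext => k.
rewrite /spar /par_nat; case: insubP => [o _ ok|_]; last by case: ifP.
have [h1 h2] := W_nz (h o isT).
case: (posnP k) => [k0|kp].
  by rewrite k0 ltn0; apply/eqP; apply: h1; rewrite ok k0.
by rewrite -ok h2 ?ok.
Qed.

Lemma sumW (R : realType) (theta : R) n (i : 'I_n) m (F : nat -> R) : val i = m.+1 ->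
  \sum_(x : 'I_n) hoppe_weight theta i x * F x = (theta * F 0%N + \sum_(x < m) F x.+1) / (theta + m%:R).
Proof.
move=> im.
rewrite (eq_bigr (fun x : 'I_n => (if (val x < m.+1)%N then (if val x == 0%N then theta else 1) * F x else 0) / (theta + m%:R))); last first.
  move=> x _; rewrite /hoppe_weight im /=.
  by case: ifP => _; rewrite ?mul0r // mulrAC.
rewrite -big_distrl /=; congr (_ / _).
rewrite -(big_mkord xpredT (fun x => (if (x < m.+1)%N then (if x == 0%N then theta else 1) * F x else 0))).
rewrite (big_cat_nat _ (n:=m.+1)) //=; last by rewrite -im; exact: ltnW (ltn_ord _).
rewrite [X in _ + X = _](_ : _ = 0) ?addr0; last first.
  rewrite big_nat_cond big1 // => x /andP [/andP [hx _] _].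
  by rewrite ltnNge hx.
rewrite big_nat_recl // ltnS leq0n eqxx.
rewrite big_mkord; congr (_ + _); apply: eq_bigr => x _.
by rewrite ltnS ltn_ord mul1r.
Qed.

Lemma Wsum (R : realType) (theta : R) n (k : 'I_n) : 0 < theta ->
  \sum_j hoppe_weight theta k j = 1.
Proof.
move=> tp.
case ek: (val k) => [|m].
  rewrite (eq_bigr (fun j : 'I_n => if val j == 0%N then 1 else 0)); last first.
    by move=> j _; rewrite /hoppe_weight ek.
  rewrite -(big_mkord xpredT (fun j => if j == 0%N then 1 else 0)).
  rewrite big_ltn; last by rewrite (leq_ltn_trans (leq0n k)).
  rewrite eqxx big_nat_cond big1 ?addr0 // => x /andP [/andP [hx _] _].
  by rewrite eqn0Ngt hx.
have := sumW theta (fun _ => 1) ek.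
rewrite (eq_bigr _ (fun j _ => mulr1 _)) => ->.
rewrite sumr_const card_ord mulr1 divff //.
by rewrite gt_eqF // ltr_wpDr.
Qed.

Lemma mass (R : realType) (theta : R) n : 0 < theta ->
  \sum_(f : {ffun 'I_n -> 'I_n}) hoppe_prob theta f = 1.
Proof.
move=> tp; rewrite /hoppe_prob -bigA_distr_bigA /=.
by rewrite big1 // => k _; apply: Wsum.
Qed.


Lemma swap_eq (T : eqType) (a x y : T) :
  ((if a == x then y else if a == y then x else a) == x) = (a == y).
Proof.
case: (a =P x) => [->|/eqP nx]; first by rewrite eq_sym.
case: (a =P y) => [ay|/eqP ny]; first by subst a; rewrite eqxx.
by rewrite (negbTE nx).
Qed.

Lemma swap_inv (T : eqType) (a x y : T) :
  (if (if a == x then y else if a == y then x else a) == x then y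
   else if (if a == x then y else if a == y then x else a) == y then x
   else (if a == x then y else if a == y then x else a)) = a.
Proof.
case: (a =P x) => [ax|/eqP nx].
  subst a; case: (y =P x) => [->|/eqP nyx] //.
  by rewrite eqxx.
case: (a =P y) => [ay|/eqP ny]; first by subst a; rewrite eqxx.
by rewrite (negbTE nx) (negbTE ny).
Qed.

Lemma indep (R : realType) (theta : R) n (i j : 'I_n)
  (G : {ffun 'I_n -> 'I_n} -> R) : 0 < theta ->
  (forall f g : {ffun 'I_n -> 'I_n}, (forall k, k != i -> f k = g k) -> G f = G g) ->
  \sum_(f : {ffun 'I_n -> 'I_n} | f i == j) hoppe_prob theta f * G f =
  hoppe_weight theta i j * \sum_(f : {ffun 'I_n -> 'I_n}) hoppe_prob theta f * G f.
Proof.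
move=> tp Ginv.
pose H (f : FF n) := \prod_(k | k != i) hoppe_weight theta k (f k) * G f.
have hp (f : FF n) : hoppe_prob theta f * G f = hoppe_weight theta i (f i) * H f.
  by rewrite /hoppe_prob (bigD1 i) //= mulrA.
have sw x y : \sum_(f : FF n | f i == x) H f = \sum_(f : FF n | f i == y) H f.
  pose s (f : {ffun 'I_n -> 'I_n}) := [ffun k => if k == i then
     (if f k == x then y else if f k == y then x else f k) else f k].
  have sK : involutive s.
    move=> f; apply/ffunP=> k; rewrite !ffunE; case: eqP => // _.
    exact: swap_inv.
  rewrite (reindex_inj (inv_inj sK)) /=; apply: eq_big => f.
    rewrite ffunE eqxx.
    exact: swap_eq.
  move=> _; rewrite /H; congr (_ * _).
    by apply: eq_bigr => k ki; rewrite ffunE (negbTE ki).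
  by apply: Ginv => k ki; rewrite ffunE (negbTE ki).
transitivity (\sum_(f : FF n | f i == j) hoppe_weight theta i j * H f).
  by apply: eq_bigr => f /eqP fi; rewrite hp fi.
rewrite -big_distrr /=; congr (_ * _).
symmetry; transitivity (\sum_(f : FF n) hoppe_weight theta i (f i) * H f).
  by apply: eq_bigr => f _; rewrite hp.
rewrite (partition_big (fun f : {ffun 'I_n -> 'I_n} => f i) xpredT) //=.
transitivity (\sum_(x : 'I_n) hoppe_weight theta i x * \sum_(f : FF n | f i == j) H f).
  apply: eq_bigr => x _; rewrite (sw j x) big_distrr /=.
  by apply: eq_big => // f /eqP ->.
by rewrite -big_distrl /= Wsum // mul1r.
Qed.


Definition Lw (R : realType) (theta : R) n (i d : nat) : R :=
  \sum_(f : FF n) hoppe_prob theta f * (dep' f i == d)%:R.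

Lemma Lw0 (R : realType) (theta : R) n d : 0 < theta -> Lw theta n 0 d = (d == 0%N)%:R.
Proof.
move=> tp; rewrite /Lw.
under eq_bigr => f _ do rewrite dep'_0.
by rewrite -big_distrl /= mass // mul1r eq_sym.
Qed.

Lemma LwS0 (R : realType) (theta : R) n (i : nat) : (0 < i < n)%N -> Lw theta n i 0 = 0.
Proof.
by move=> h; rewrite /Lw big1 // => f _; rewrite dep'_S // mulr0.
Qed.

Lemma LwS (R : realType) (theta : R) n (io : 'I_n) d : 0 < theta -> (0 < io)%N ->
  Lw theta n io d.+1 = \sum_(x : 'I_n) hoppe_weight theta io x * Lw theta n x d.
Proof.
move=> tp i0.
have hi : (0 < io < n)%N by rewrite i0 ltn_ord.
rewrite /Lw.
under eq_bigr => f _ do rewrite dep'_S // eqSS.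
rewrite (partition_big (fun f : FF n => f io) xpredT) //=.
apply: eq_bigr => x _.
pose sp := if (x < io)%N then val x else 0%N.
have spl : (sp < io)%N by rewrite /sp; case: ifP.
transitivity (\sum_(f : FF n | f io == x) hoppe_prob theta f * (dep' f sp == d)%:R).
  apply: eq_bigr => f /eqP fx.
  by rewrite /spar /par_nat valK fx.
rewrite (@indep _ _ _ io x (fun f => (dep' f sp == d)%:R)) //; last first.
  by move=> f g e; rewrite (dep'_loc e spl).
rewrite /sp; case: ifP => // xi.
by rewrite /hoppe_weight (negbTE (lt0n_neq0 i0)) xi !mul0r.
Qed.

Lemma Q_rec (R : realType) (theta : R) m : 0 < theta ->
  (theta + m%:R)%:P * Qp theta m = theta%:P + \sum_(j < m) 'X * Qp theta j.
Proof.
move=> tp; elim: m => [|m IH].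
  by rewrite /Qp !big_ord0 !addr0 mulr1.
rewrite (big_ord_recr m) /= addrA -IH.
rewrite {1}/Qp (big_ord_recr m) /= -/(Qp theta m).
have ne : theta + m.+1%:R != 0 by rewrite gt_eqF // ltr_wpDr.
have e1 : (theta + m.+1%:R) * (1 - pcoef theta m) = theta + m%:R.
  by rewrite /pcoef mulrBr mulr1 mul1r mulfV // -natr1 addrA addrK.
have e2 : (theta + m.+1%:R) * pcoef theta m = 1.
  by rewrite /pcoef mul1r mulfV.
rewrite mulrCA mulrDr -polyCM e1.
have -> : (theta + m.+1%:R)%:P * ((pcoef theta m)%:P * 'X) = 'X.
  by rewrite mulrA -polyCM e2 mul1r.
by rewrite mulrDr mulrC [Qp theta m * _]mulrC.
Qed.

Lemma Q_coef (R : realType) (theta : R) m d : 0 < theta ->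
  (Qp theta m)`_d = (theta * (d == 0%N)%:R +
     \sum_(j < m) (if d is d'.+1 then (Qp theta j)`_d' else 0)) / (theta + m%:R).
Proof.
move=> tp.
have ne : theta + m%:R != 0 by rewrite gt_eqF // ltr_wpDr.
have := congr1 (fun p : {poly R} => p`_d) (Q_rec (theta:=theta) m tp).
rewrite /= coefCM coefD coefC coef_sum => h.
rewrite -[LHS](mulKf ne) h mulrC; congr (_ / _); congr (_ + _).
  by case: d {h} => [|d] /=; rewrite ?mulr1 ?mulr0.
by apply: eq_bigr => j _; rewrite coefXM; case: d {h}.
Qed.

Lemma Lw_Q (R : realType) (theta : R) n m d : 0 < theta -> (m.+1 < n)%N ->
  Lw theta n m.+1 d = if d is d'.+1 then (Qp theta m)`_d' else 0.
Proof.
move=> tp; elim/ltn_ind: m d => m IH d hm.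
case: d => [|d]; first by apply: LwS0; rewrite ltn0Sn.
pose io := Ordinal hm.
rewrite -[m.+1]/(val io) LwS //.
rewrite (sumW theta (fun x => Lw theta n x d) (erefl _ : val io = m.+1)).
rewrite Q_coef // Lw0 //; congr ((_ + _) / _).
apply: eq_bigr => j _; rewrite IH //.
by rewrite (ltn_trans _ hm) // ltnS.
Qed.

Theorem theorem2p1 (R : realType) (theta : R) (n : nat) :
  0 < theta -> (2 <= n)%N ->
  forall d : nat, hoppe_depth_law theta n d = bernoulli_sum_law theta n d.
Proof.
move=> tp n2 d.
rewrite bern_law.
have en : n.-1 = (n - 2).+1 by case: n n2 => [|[|n]] //= _; rewrite subn2.
transitivity (Lw theta n n.-1 d).
  rewrite /hoppe_depth_law /Lw; apply: eq_bigr => f _.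
  have [->|nz] := eqVneq (hoppe_prob theta f) 0; first by rewrite mul0r if_same.
  by rewrite (depth_dep' _ nz); case: eqP; rewrite ?mulr1 ?mulr0.
rewrite en Lw_Q //.
by rewrite -en; case: n n2 {en} => [|n] //=.
Qed.
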